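(* Consider binary-payoff, perfect-news collective choice problems (as in the context) with a fixed number $n$ of voters, each described by $(P_W,v)$ with $v=(v_w,v_\ell)$. (a) If two such problems have the same $P_W$ and payoffs $v,v'$ with $v_\ell/v_w\ge v'_\ell/v'_w$, then $(P_W,v)\succeq_{AC}(P_W,v')$. (b) If two such problems have the same payoffs $v$ and winner distributions $P_W,P'_W$ with $P_W\succeq_{LR}P'_W$, then $(P'_W,v)\succeq_{AC}(P_W,v)$.
   Context: Setting: $n\ge3$ odd, $\tau=(n-1)/2$, voters $1,\dots,n$ vote for $p^*$ or $p_*$, a policy wins iff it gets more than $\tau$ votes. A state $\omega$ specifies each voter's payoff difference $V_i^d$ between $p^*$ and $p_*$ and a signal $s_i\in\mathcal S=\{s^0,\dots,s^K\}$ privately observed by $i$ ($\mathcal M=\{s^1,\dots,s^K\}$ informative); $P$ is the probability on states. Standing assumptions: $P$ invariant under permutations of voters; if $s_i=s^0$ then $s_i$ is independent of $(V,S_{-i})$; for $s_i\ne s^0$, $E[V_i^d\mid S=s]>0$ iff $E[V_i^d\mid S_i=s_i]>0$; conditional expectations of $V_i^d$ given non-null events are nonzero; $P(B\ge1)>0$ and $P(G\ge\tau)>0$, where $G$ ($B$) counts voters whose signal $s^k$ is good news, $E[V_i^d\mid S_i=s^k]>0$ (bad news, $<0$). Binary payoffs: $V_i^d\in\{v_w,-v_\ell\}$ with $v_w,v_\ell>0$; $W_i=\{V_i^d>0\}$ (voter $i$ is a winner), $W$ = number of winners, $P_W$ the distribution of $W$ on $\{0,\dots,n\}$; $p^*$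 is ex ante optimal: $P(W_i)v_w-(1-P(W_i))v_\ell>0$. Perfect news: $P(W_i\mid S_i=s^k)\in\{0,1\}$ for every informative $s^k$. Then the problem is represented by $(P_W,v)$, and $V^G(\kappa\mid P_W,v)=E[V_i^d\mid G=\kappa,B=0,S_i=s^0]$ depends only on $(P_W,v)$. The polarization ratio is $v_\ell/v_w$. $(P_W,v)\succeq_{AC}(P'_W,v')$ (''more adversely correlated'') means: for every $\kappa\in\{1,\dots,\tau\}$, $V^G(\kappa\mid P'_W,v')<0$ implies $V^G(\kappa\mid P_W,v)<0$. $P'_W\succeq_{LR}P_W$ (likelihood-ratio dominance) means $P'_W(w')P_W(w)\ge P'_W(w)P_W(w')$ whenever $w'>w$. *)

(* Defs.v *)
From mathcomp Require Import all_boot all_order all_algebra.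
Set Implicit Arguments. Unset Strict Implicit. Unset Printing Implicit Defensive.
Import Order.TTheory GRing.Theory Num.Theory.
Local Open Scope ring_scope.

(* Binary-payoff, perfect-news collective choice problem with n voters,
   represented by (P_W, v) where P_W : nat -> R is the distribution of the
   number of winners W on {0,...,n}, v = (vw, vl). *)

Definition tau (n : nat) : nat := (n.-1)./2.

(* Probability that a given voter is a winner: P(W_i) = E[W]/n (exchangeability). *)
Definition prob_winner {R : realFieldType} (n : nat) (PW : nat -> R) : R :=
  (\sum_(0 <= w < n.+1) PW w * w%:R) / n%:R.

(* The standing assumptions, as far as they constrain (P_W, v):
   P_W is a probability distribution on {0..n}; vw, vl > 0;
   p* ex ante optimal; P(G >= tau) > 0 forces mass on {W >= tau};
   P(B >= 1) > 0 forces mass on {W < n}. *)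
Definition binary_problem {R : realFieldType} (n : nat) (PW : nat -> R)
    (vw vl : R) : Prop :=
  (forall w, 0 <= PW w) /\
  (forall w, (n < w)%N -> PW w = 0) /\
  \sum_(0 <= w < n.+1) PW w = 1 /\
  0 < vw /\ 0 < vl /\
  0 < prob_winner n PW * vw - (1 - prob_winner n PW) * vl /\
  (exists w, [/\ (tau n <= w)%N, (w <= n)%N & 0 < PW w]) /\
  (exists w, (w < n)%N /\ 0 < PW w).

(* V^G(k | P_W, v) = E[V_i^d | G = k, B = 0, S_i = s^0].
   Given W = w, the winner set is uniform (exchangeability); conditioning on
   k given voters being (revealed) winners, none revealed a loser, and i
   uninformed (null signals independent of everything) yields posterior
   weights proportional to P_W(w) * C(w,k), and P(i wins | w, k) = (w-k)/(n-k). *)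
Definition VG {R : realFieldType} (n : nat) (PW : nat -> R) (vw vl : R)
    (k : nat) : R :=
  (\sum_(0 <= w < n.+1)
      PW w * 'C(w, k)%:R * ((w - k)%:R * vw - (n - w)%:R * vl))
  / ((n - k)%:R * \sum_(0 <= w < n.+1) PW w * 'C(w, k)%:R).

Definition more_adverse {R : realFieldType} (n : nat)
    (PW : nat -> R) (vw vl : R) (PW' : nat -> R) (vw' vl' : R) : Prop :=
  forall k : nat, (1 <= k)%N -> (k <= tau n)%N ->
    VG n PW' vw' vl' k < 0 -> VG n PW vw vl k < 0.

Definition lr_dom {R : realFieldType} (n : nat) (P' P : nat -> R) : Prop :=
  forall w w' : nat, (w < w')%N -> (w' <= n)%N ->
    P' w * P w' <= P' w' * P w.

(* Main.v *)
Require Import Defs.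
From mathcomp Require Import all_boot all_order all_algebra.
From mathcomp Require Import ring lra zify.
Import Order.TTheory GRing.Theory Num.Theory.
Local Open Scope ring_scope.

Lemma lr_key (R : realFieldType) (N : nat) (q q' h : nat -> R) :
  (forall w w', (w < w')%N -> (w' <= N)%N -> q w * q' w' <= q w' * q' w) ->
  (forall w w', (w <= w')%N -> h w <= h w') ->
  (\sum_(0 <= w < N.+1) q' w * h w) * (\sum_(0 <= w < N.+1) q w)
  <= (\sum_(0 <= w < N.+1) q w * h w) * (\sum_(0 <= w < N.+1) q' w).
Proof.
move=> Hlr Hh.
set S := \sum_(0 <= w < N.+1) \sum_(0 <= w' < N.+1) q' w * q w' * (h w - h w').
have E1 : (\sum_(0 <= w < N.+1) q' w * h w) * (\sum_(0 <= w < N.+1) q w)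
  - (\sum_(0 <= w < N.+1) q w * h w) * (\sum_(0 <= w < N.+1) q' w) = S.
  rewrite /S mulr_suml.
  rewrite [X in _ - X]mulrC mulr_suml -sumrB; apply: eq_bigr => w _.
  rewrite !mulr_sumr -sumrB; apply: eq_bigr => w' _.
  ring.
have E2 : S = \sum_(0 <= w < N.+1) \sum_(0 <= w' < N.+1) q' w' * q w * (h w' - h w).
  by rewrite /S exchange_big.
have E3 : S + S = \sum_(0 <= w < N.+1) \sum_(0 <= w' < N.+1)
    (q' w * q w' - q' w' * q w) * (h w - h w').
  rewrite {1}E2 /S -big_split; apply: eq_bigr => w _.
  rewrite -big_split; apply: eq_bigr => w' _ /=. ring.
have : S + S <= 0.
  rewrite E3 big_nat_cond; apply: sumr_le0 => w /andP[/andP[_ Hw] _].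
  rewrite big_nat_cond; apply: sumr_le0 => w' /andP[/andP[_ Hw'] _].
  case: (ltngtP w w') => Hww.
  - have H1 := Hlr w w' Hww Hw'. have H2 := Hh w w' (ltnW Hww).
    apply: mulr_ge0_le0; lra.
  - have H1 := Hlr w' w Hww Hw. have H2 := Hh w' w (ltnW Hww).
    apply: mulr_le0_ge0; lra.
  - by rewrite Hww !subrr mul0r.
lra.
Qed.

Lemma div_neg (R : realFieldType) (A c Q : R) :
  0 < c -> 0 <= Q -> A / (c * Q) < 0 -> A < 0 /\ 0 < Q.
Proof.
move=> hc hQ.
have [->|Q0] := eqVneq Q 0; first by rewrite mulr0 invr0 mulr0 ltxx.
have hQ' : 0 < Q by rewrite lt_def Q0 hQ.
have hcQ : 0 < c * Q by apply: mulr_gt0.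
by rewrite pmulr_llt0 ?invr_gt0.
Qed.

Lemma div_neg' (R : realFieldType) (A c Q : R) :
  0 < c -> 0 < Q -> A < 0 -> A / (c * Q) < 0.
Proof.
move=> hc hQ hA.
have hcQ : 0 < c * Q by apply: mulr_gt0.
by rewrite pmulr_llt0 ?invr_gt0.
Qed.

Lemma sum_split2 (R : realFieldType) (N : nat) (q a b : nat -> R) (x y : R) :
  \sum_(0 <= w < N) q w * (a w * x - b w * y)
  = (\sum_(0 <= w < N) q w * a w) * x - (\sum_(0 <= w < N) q w * b w) * y.
Proof.
rewrite !mulr_suml -sumrB; apply: eq_bigr => w _; ring.
Qed.

Lemma sum_pos (R : realFieldType) (m N j : nat) (F : nat -> R) :
  (forall i, 0 <= F i) -> (m <= j < N)%N -> 0 < F j ->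
  0 < \sum_(m <= i < N) F i.
Proof.
move=> hF hj hFj.
rewrite (bigD1_seq j) ?mem_iota ?iota_uniq //=; last by lia.
have : 0 <= \sum_(i <- index_iota m N | i != j) F i by apply: sumr_ge0.
lra.
Qed.

Theorem proposition3 (R : realFieldType) (n : nat) :
  odd n -> (3 <= n)%N ->
  (forall (PW : nat -> R) (vw vl vw' vl' : R),
      binary_problem n PW vw vl -> binary_problem n PW vw' vl' ->
      vl' / vw' <= vl / vw ->
      more_adverse n PW vw vl PW vw' vl')
  /\
  (forall (PW PW' : nat -> R) (vw vl : R),
      binary_problem n PW vw vl -> binary_problem n PW' vw vl ->
      lr_dom n PW PW' ->
      more_adverse n PW' vw vl PW vw vl).
Proof.
move=> hodd hn3.
have hkn : forall k, (k <= tau n)%N -> (k < n)%N by move=> k; rewrite /tau; lia.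
have hnk : forall k, (k <= tau n)%N -> 0 < (n - k)%:R :> R.
  by move=> k hk; rewrite ltr0n subn_gt0 hkn.
split.
- move=> PW vw vl vw' vl' hP hP' hr k hk1 hk.
  case: hP => [hPW0 [_ [_ [hvw [hvl _]]]]].
  case: hP' => [_ [_ [_ [hvw' [hvl' _]]]]].
  rewrite /VG => /div_neg [| |].
  + exact: hnk.
  + by apply: sumr_ge0 => w _; apply: mulr_ge0.
  move=> hA hQ; apply: div_neg' => //; first exact: hnk.
  move: hA; rewrite !sum_split2.
  set X := \sum_(0 <= w < n.+1) _.
  set Y := \sum_(0 <= w < n.+1) _.
  have hY : 0 <= Y by apply: sumr_ge0 => w _; apply: mulr_ge0; [apply: mulr_ge0|].
  set r' := vl' / vw'. set r := vl / vw.
  have e' : vl' = r' * vw' by rewrite /r' divfK // gt_eqF.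
  have e : vl = r * vw by rewrite /r divfK // gt_eqF.
  move=> hA.
  have h1 : vw' * (X - r' * Y) < 0 by rewrite mulrBr; move: hA; rewrite e'; lra.
  have h2 : X - r' * Y < 0 by rewrite -(pmulr_rlt0 _ hvw').
  have h3 : r' * Y <= r * Y by apply: ler_wpM2r.
  have h4 : vw * (X - r * Y) < 0 by rewrite pmulr_rlt0 //; lra.
  move: h4; rewrite e; lra.
- move=> PW PW' vw vl hP hP' hlr k hk1 hk.
  case: hP => [hPW0 [_ [_ [hvw [hvl _]]]]].
  case: hP' => [hPW0' [_ [_ [_ [_ [_ [[w0 [hw0a hw0b hw0c]] _]]]]]]].
  rewrite /VG => /div_neg [| |].
  + exact: hnk.
  + by apply: sumr_ge0 => w _; apply: mulr_ge0.
  move=> hA hQ.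
  have hQ' : 0 < \sum_(0 <= w < n.+1) PW' w * 'C(w, k)%:R.
    apply: (@sum_pos _ 0 n.+1 w0).
    + by move=> i; apply: mulr_ge0.
    + by apply/andP; split; lia.
    + apply: mulr_gt0 => //; rewrite ltr0n bin_gt0; lia.
  apply: div_neg' => //; first exact: hnk.
  have key := @lr_key R n (fun w => PW w * 'C(w, k)%:R) (fun w => PW' w * 'C(w, k)%:R)
    (fun w => (w - k)%:R * vw - (n - w)%:R * vl).
  have hh : forall w w' : nat, (w <= w')%N ->
      (w - k)%:R * vw - (n - w)%:R * vl <= (w' - k)%:R * vw - (n - w')%:R * vl :> R.
    move=> w w' hww.
    have ha : (w - k)%:R <= (w' - k)%:R :> R by rewrite ler_nat leq_sub2r.
    have hb : (n - w')%:R <= (n - w)%:R :> R by rewrite ler_nat leq_sub2l.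
    by apply: lerB; apply: ler_wpM2r => //; apply: ltW.
  have hq : forall w w' : nat, (w < w')%N -> (w' <= n)%N ->
      PW w * 'C(w, k)%:R * (PW' w' * 'C(w', k)%:R)
      <= PW w' * 'C(w', k)%:R * (PW' w * 'C(w, k)%:R).
    move=> w w' h1 h2.
    have := hlr w w' h1 h2.
    move/(ler_wpM2r (mulr_ge0 (ler0n R 'C(w, k)) (ler0n R 'C(w', k)))).
    set a := 'C(w, k)%:R. set b := 'C(w', k)%:R.
    move=> H.
    have -> : PW w * a * (PW' w' * b) = PW w * PW' w' * (a * b) by ring.
    have -> : PW w' * b * (PW' w * a) = PW w' * PW' w * (a * b) by ring.
    exact: H.
  have := key hq hh.
  set A := \sum_(0 <= w < n.+1) PW w * _ * _.
  set A' := \sum_(0 <= w < n.+1) PW' w * _ * _.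
  set Q := \sum_(0 <= w < n.+1) PW w * _.
  set Q' := \sum_(0 <= w < n.+1) PW' w * _.
  move=> hk'.
  have hAQ : A * Q' < 0 by rewrite pmulr_llt0.
  have : A' * Q < 0 by apply: le_lt_trans hAQ.
  by rewrite pmulr_llt0.
Qed.
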